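(* Fix $\theta,\gamma>0$ and $\beta>0$, and consider the modified GFI process described in the context. Then it is supercritical ($\overline\lambda>0$) when $\gamma>\theta$, critical ($\overline\lambda=0$) when $\gamma=\theta$, and subcritical ($\overline\lambda<0$) when $\gamma<\theta$.
   Context: The modified GFI process with parameters $(\beta,\theta,\gamma)$ has the same growth (each active vertex attaches a new active vertex by an open edge at rate $\beta$) and fragmentation (each open edge closes at rate $\gamma$) as the GFI process, but detection is attached to edges: each open edge of an active cluster independently triggers, at rate $\theta$, the isolation (inactivation) of its whole cluster (maximal set of vertices connected by open edges). In terms of sizes, an active cluster of size $n$ grows to size $n+1$ at rate $\beta n$, is isolated at rate $\theta(n-1)$, and splits into clusters of sizes $n-j$ and $j$ at rate $\gamma n/(j(j+1))$, $1\le j\le n-1$. The generator of its first moment semigroup is $\overline{\mathcal{L}}f(n)=\beta n(f(n+1)-f(n))-\theta(n-1)f(n)+\sum_{j=1}^{n-1}\frac{\gamma n}{j(j+1)}(f(j)+f(n-j)-f(n))$, and $\overline\lambda=\overline\lambda(\beta,\theta,\gamma)$ denotes its Perron root (Malthusian exponent), i.e. the real number for which there exist a positive function $\overline h$ bounded above and below by positive constants and a positive probability vector $\overline\pi$ with $\overline{\mathcal{L}}\overline h=\overline\lambda\,\overline h$ and $\overline\pi e^{t\overline{\mathcal L}}=e^{\overline\lambda t}\overline\pi$. *)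

(* Defs.v *)
From Stdlib Require Import Reals Lra Lia.
From Coquelicot Require Import Coquelicot.
Open Scope R_scope.

(* Cluster sizes are the natural numbers n >= 1; functions are on nat and only
   their values at n >= 1 matter (value at 0 is irrelevant / set to 0). *)

(* Generator of the first moment semigroup of the modified GFI process:
   Lbar f(n) = beta n (f(n+1)-f(n)) - theta (n-1) f(n)
             + sum_{j=1}^{n-1} gamma n/(j(j+1)) (f(j)+f(n-j)-f(n)). *)
Definition Lbar (beta theta gamma : R) (f : nat -> R) (n : nat) : R :=
  beta * INR n * (f (S n) - f n)
  - theta * (INR n - 1) * f n
  + sum_n_m (fun j => gamma * INR n / (INR j * (INR j + 1))
                      * (f j + f (n - j)%nat - f n)) 1 (n - 1).

Definition indic (m : nat) : nat -> R := fun n => if Nat.eqb n m then 1 else 0.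

Definition Lbar_entry (beta theta gamma : R) (n m : nat) : R :=
  Lbar beta theta gamma (indic m) n.

(* lam is a Perron root (Malthusian exponent) of Lbar:
   - a right eigenfunction h, bounded above and below by positive constants,
     with Lbar h = lam h on {n >= 1};
   - a positive probability vector pi on {n >= 1} which is a left eigenvector,
     (pi Lbar)(m) = sum_n pi(n) Lbar(n,m) = lam pi(m), the series converging
     (this is the stationary form of pi e^{t Lbar} = e^{lam t} pi). *)
Definition IsPerronRoot (beta theta gamma lam : R) : Prop :=
  (exists h : nat -> R,
      (exists c C : R, 0 < c /\ forall n, (1 <= n)%nat -> c <= h n <= C) /\
      (forall n, (1 <= n)%nat -> Lbar beta theta gamma h n = lam * h n)) /\
  (exists pi : nat -> R,
      pi 0%nat = 0 /\
      (forall n, (1 <= n)%nat -> 0 < pi n) /\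
      is_series pi 1 /\
      (forall m, (1 <= m)%nat ->
         is_series (fun n => pi n * Lbar_entry beta theta gamma n m) (lam * pi m))).

(* Main.v *)
Require Import Defs.
From Stdlib Require Import Reals Lra Lia ZArith.
From Coquelicot Require Import Coquelicot.
Open Scope R_scope.

Fixpoint sumto (g : nat -> R) (M : nat) : R :=
  match M with O => 0 | S K => sumto g K + g (S K) end.

Lemma sum_n_sumto g M : sum_n g M = g O + sumto g M.
Proof.
  induction M as [|M IH]; simpl.
  - rewrite sum_O. lra.
  - rewrite sum_Sn, IH. change (plus (g O + sumto g M) (g (S M))) with ((g O + sumto g M) + g (S M)). lra.
Qed.

Lemma sumto_ext_loc f g M : (forall k, (1 <= k <= M)%nat -> f k = g k) -> sumto f M = sumto g M.
Proof.
  induction M as [|M IH]; intros H; simpl; [lra|].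
  rewrite IH by (intros; apply H; lia). rewrite (H (S M)) by lia. lra.
Qed.

Lemma sumto_lin f g b M : sumto (fun m => f m + b * g m) M = sumto f M + b * sumto g M.
Proof. induction M as [|M IH]; simpl; [lra|]. rewrite IH. ring. Qed.

Lemma sumto_ge f M j : (forall k, (1 <= k)%nat -> 0 <= f k) -> (1 <= j <= M)%nat -> f j <= sumto f M.
Proof.
  intros Hf. induction M as [|M IH]; intros Hj; [lia|]. simpl.
  destruct (Nat.eq_dec j (S M)) as [->|Hne].
  - assert (0 <= sumto f M).
    { clear IH Hj. induction M; simpl; [lra|]. specialize (Hf (S M)). assert (0 <= f (S M)) by (apply Hf; lia). lra. }
    lra.
  - assert (f j <= sumto f M) by (apply IH; lia). assert (0 <= f (S M)) by (apply Hf; lia). lra.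
Qed.

Lemma sumto_block g N b t : (forall i, (N < i <= N + b)%nat -> t <= g i) ->
  sumto g N + INR b * t <= sumto g (N + b).
Proof.
  induction b as [|b IH]; intros H.
  - rewrite Nat.add_0_r. simpl. lra.
  - rewrite Nat.add_succ_r, S_INR. simpl.
    assert (t <= g (S (N + b))) by (apply H; lia).
    assert (sumto g N + INR b * t <= sumto g (N + b)) by (apply IH; intros; apply H; lia).
    lra.
Qed.

Lemma partial_le_lim (a : nat -> R) l M : is_series a l -> (forall n, (M < n)%nat -> 0 <= a n) ->
  sum_n a M <= l.
Proof.
  intros Hs Hp.
  assert (H := is_lim_seq_le_loc (fun _ => sum_n a M) (sum_n a) (sum_n a M) l).
  simpl in H. apply H; [| apply is_lim_seq_const | exact Hs].
  exists M. intros n Hn. clear H Hs.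
  induction n as [|n IH].
  - assert (M = O) by lia. subst. lra.
  - destruct (Nat.eq_dec M (S n)) as [->|Hne]; [lra|].
    rewrite sum_Sn. change (plus (sum_n a n) (a (S n))) with (sum_n a n + a (S n)).
    assert (sum_n a M <= sum_n a n) by (apply IH; lia). assert (0 <= a (S n)) by (apply Hp; lia). lra.
Qed.

Lemma no_harmonic (pi : nat -> R) kap : 0 < kap -> pi O = 0 -> (forall n, 0 <= pi n) -> is_series pi 1 ->
  (forall n, (2 <= n)%nat -> kap <= INR n * pi n) -> False.
Proof.
  intros Hk H0 Hpos Hs Hn.
  assert (Hb : forall N, sumto pi N <= 1).
  { intros N. assert (H := partial_le_lim pi 1 N Hs (fun n _ => Hpos n)). rewrite sum_n_sumto, H0 in H. lra. }
  assert (Hg : forall k, INR k * (kap / 2) <= sumto pi (2 ^ k)).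
  { induction k as [|k IH].
    - simpl. assert (pi 1%nat <= sumto pi 1) by (apply sumto_ge; intros; auto; lia). specialize (Hpos 1%nat). lra.
    - assert (E : (2 ^ S k = 2 ^ k + 2 ^ k)%nat) by (simpl; lia).
      rewrite E. 
      assert (Hp2 : (1 <= 2 ^ k)%nat) by (apply Nat.le_succ_l, Nat.neq_0_lt_0, Nat.pow_nonzero; lia).
      assert (INR (2^k) > 0) by (apply lt_0_INR; lia).
      assert (HB := sumto_block pi (2^k) (2^k) (kap / (2 * INR (2^k)))).
      assert (INR (2 ^ k) * (kap / (2 * INR (2 ^ k))) = kap / 2) by (field; lra).
      rewrite S_INR.
      enough (sumto pi (2 ^ k) + INR (2 ^ k) * (kap / (2 * INR (2 ^ k))) <= sumto pi (2 ^ k + 2 ^ k)) by lra.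
      apply HB. intros i Hi.
      assert (Hi2 : (2 <= i)%nat) by lia. specialize (Hn i Hi2).
      assert (INR i <= 2 * INR (2^k)). { assert (HH : INR i <= INR (2 * 2^k)) by (apply le_INR; lia). rewrite mult_INR in HH. simpl in HH. lra. }
      assert (INR i > 0) by (apply lt_0_INR; lia).
      specialize (Hpos i).
      apply (Rmult_le_reg_l (2 * INR (2^k))); [lra|].
      field_simplify; [|lra]. nra. }
  destruct (archimed (2 / kap)) as [Ha _].
  destruct (Z_lt_le_dec (up (2/kap)) 0) as [Hz|Hz].
  - assert (2 / kap > 0) by (apply Rdiv_lt_0_compat; lra). apply IZR_lt in Hz. lra.
  - destruct (IZN _ Hz) as [k Hkk]. rewrite Hkk, <- INR_IZR_INZ in Ha.
    specialize (Hg k). specialize (Hb (2 ^ k)%nat).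
    assert (INR k * kap > 2). { apply (Rmult_lt_compat_r kap) in Ha; [|lra]. unfold Rdiv in Ha. rewrite Rmult_assoc, Rinv_l in Ha; lra. }
    lra.
Qed.

Lemma sumR_plus (u v : nat -> R) n m : sum_n_m (fun k => u k + v k) n m = sum_n_m u n m + sum_n_m v n m.
Proof. exact (sum_n_m_plus u v n m). Qed.
Lemma sumR_mult a (u : nat -> R) n m : sum_n_m (fun k => a * u k) n m = a * sum_n_m u n m.
Proof. exact (sum_n_m_mult_l a u n m). Qed.

Lemma Lbar_lin be th ga f g b n :
  Lbar be th ga (fun k => f k + b * g k) n = Lbar be th ga f n + b * Lbar be th ga g n.
Proof.
  unfold Lbar.
  rewrite (sum_n_m_ext _ (fun j => (ga * INR n / (INR j * (INR j + 1)) * (f j + f (n - j)%nat - f n))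
      + (b * (ga * INR n / (INR j * (INR j + 1)) * (g j + g (n - j)%nat - g n))))).
  2:{ intros j. match goal with |- ?a = ?b => change (@eq R a b) end. ring. }
  rewrite sumR_plus, sumR_mult. ring.
Qed.

Lemma Lbar_ext be th ga f g n : (forall k, f k = g k) -> Lbar be th ga f n = Lbar be th ga g n.
Proof.
  intros H. unfold Lbar. rewrite (sum_n_m_ext _ (fun j => ga * INR n / (INR j * (INR j + 1)) * (g j + g (n - j)%nat - g n))).
  2:{ intros j. rewrite !H. reflexivity. }
  rewrite !H. reflexivity.
Qed.

Lemma Lbar_zero be th ga n : Lbar be th ga (fun _ => 0) n = 0.
Proof.
  assert (H := Lbar_lin be th ga (fun _ => 0) (fun _ => 0) 1 n).
  rewrite (Lbar_ext be th ga (fun k => 0 + 1 * 0) (fun _ => 0)) in H by (intros; ring). lra.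
Qed.

Lemma Lbar_loc be th ga f g n : (1 <= n)%nat -> (forall k, (1 <= k <= n)%nat -> f k = g k) ->
  Lbar be th ga f n = Lbar be th ga g n + be * INR n * (f (S n) - g (S n)).
Proof.
  intros Hn H. unfold Lbar.
  rewrite (sum_n_m_ext_loc _ (fun j => ga * INR n / (INR j * (INR j + 1)) * (g j + g (n - j)%nat - g n))).
  2:{ intros j Hj. rewrite (H j), (H (n - j)%nat), (H n) by lia. reflexivity. }
  rewrite (H n) by lia. ring.
Qed.

Lemma tel_sum n : (1 <= n)%nat -> sum_n_m (fun j => 1 / (INR j * (INR j + 1))) 1 (n - 1) = 1 - 1 / INR n.
Proof.
  intros Hn. induction n as [|n IH]; [lia|].
  destruct n as [|n].
  - simpl. rewrite sum_n_m_zero by lia. match goal with |- ?a = ?b => change (@eq R a b) end. change (@zero R_AbelianMonoid) with 0. simpl. field.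
  - replace (S (S n) - 1)%nat with (S n) by lia. rewrite sum_n_Sm by lia.
    replace (S n - 1)%nat with n in IH by lia. rewrite IH by lia.
    change (plus ?x ?y) with (x + y).
    rewrite !S_INR. assert (0 <= INR n) by apply pos_INR. match goal with |- ?a = ?b => change (@eq R a b) end. field. lra.
Qed.

Lemma Lbar_one be th ga n : (1 <= n)%nat -> Lbar be th ga (fun _ => 1) n = (ga - th) * (INR n - 1).
Proof.
  intros Hn. unfold Lbar.
  rewrite (sum_n_m_ext _ (fun j => (ga * INR n) * (1 / (INR j * (INR j + 1))))).
  2:{ intros j. match goal with |- ?a = ?b => change (@eq R a b) end. unfold Rdiv. ring. }
  rewrite sumR_mult, tel_sum by lia.
  assert (INR n > 0) by (apply lt_0_INR; lia). field. lra.
Qed.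

Lemma Lbar_nonneg be th ga f n : (forall k, 0 <= f k) -> f n = 0 -> f (S n) = 0 -> 0 <= ga ->
  0 <= Lbar be th ga f n.
Proof.
  intros Hf H1 H2 Hg. unfold Lbar. rewrite H1, H2.
  assert (0 <= sum_n_m (fun j => ga * INR n / (INR j * (INR j + 1)) * (f j + f (n - j)%nat - 0)) 1 (n - 1)).
  { assert (HH := sum_n_m_le (fun _ => 0) (fun j => ga * INR n / (INR j * (INR j + 1)) * (f j + f (n - j)%nat - 0)) 1 (n-1)).
    rewrite sum_n_m_const in HH. rewrite Rmult_0_r in HH. apply HH.
    intros k. apply Rmult_le_pos.
    - unfold Rdiv. apply Rmult_le_pos; [apply Rmult_le_pos; [lra| apply pos_INR]|].
      destruct k as [|k].
      + simpl. rewrite Rmult_0_l, Rinv_0. lra.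
      + apply Rlt_le, Rinv_0_lt_compat. assert (0 < INR (S k)) by (apply lt_0_INR; lia). nra.
    - generalize (Hf k) (Hf (n - k)%nat). lra. }
  lra.
Qed.

Definition trunc (a : nat -> R) (M : nat) : nat -> R :=
  fun k => if andb (Nat.leb 1 k) (Nat.leb k M) then a k else 0.

Lemma isR_plus (a b : nat -> R) la lb : is_series a la -> is_series b lb -> is_series (fun n => a n + b n) (la + lb).
Proof. exact (is_series_plus a b la lb). Qed.
Lemma isR_scal (a : nat -> R) c l : is_series a l -> is_series (fun n => c * a n) (c * l).
Proof. exact (is_series_scal c a l). Qed.

Lemma isR_ext (a b : nat -> R) l : (forall n, a n = b n) -> is_series a l -> is_series b l.
Proof. exact (is_series_ext a b l). Qed.

Lemma sumto_scal b g M : sumto (fun m => b * g m) M = b * sumto g M.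
Proof. induction M as [|M IH]; simpl; [ring|]. rewrite IH. ring. Qed.

Lemma trunc_S a M k : trunc a (S M) k = trunc a M k + a (S M) * indic (S M) k.
Proof.
  unfold trunc, indic.
  destruct (Nat.leb_spec 1 k), (Nat.leb_spec k M), (Nat.leb_spec k (S M)), (Nat.eqb_spec k (S M));
    simpl; try lia; try ring; subst; ring.
Qed.

Lemma series_trunc be th ga lam (pi : nat -> R) :
  is_series pi 1 ->
  (forall m, (1 <= m)%nat -> is_series (fun n => pi n * Lbar_entry be th ga n m) (lam * pi m)) ->
  forall a M, is_series (fun n => pi n * Lbar be th ga (trunc a M) n) (lam * sumto (fun m => a m * pi m) M).
Proof.
  intros Hs Hpi a M. induction M as [|M IH].
  - simpl. apply (isR_ext (fun n => 0 * pi n)).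
    + intros n. rewrite (Lbar_ext _ _ _ (trunc a 0) (fun _ => 0)).
      * rewrite Lbar_zero. ring.
      * intros k. unfold trunc. destruct (Nat.leb_spec 1 k), (Nat.leb_spec k 0); simpl; try lia; reflexivity.
    + replace (lam * 0) with (0 * 1) by ring. apply isR_scal. exact Hs.
  - apply (isR_ext (fun n => pi n * Lbar be th ga (trunc a M) n + a (S M) * (pi n * Lbar_entry be th ga n (S M)))).
    + intros n. rewrite (Lbar_ext _ _ _ (trunc a (S M)) (fun k => trunc a M k + a (S M) * indic (S M) k)) by (intros; apply trunc_S).
      rewrite Lbar_lin. unfold Lbar_entry. ring.
    + replace (lam * sumto (fun m => a m * pi m) (S M)) with
        (lam * sumto (fun m => a m * pi m) M + a (S M) * (lam * pi (S M))) by (simpl; ring).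
      apply isR_plus; [exact IH|]. apply isR_scal. apply Hpi. lia.
Qed.

Section Key.
Variables (be th ga lam c : R) (h pi : nat -> R).
Hypothesis hbe : 0 < be.
Hypothesis hga : 0 < ga.
Hypothesis Hh : forall n, (1 <= n)%nat -> c <= h n.
Hypothesis Heig : forall n, (1 <= n)%nat -> Lbar be th ga h n = lam * h n.
Hypothesis Hp0 : pi O = 0.
Hypothesis Hppos : forall n, (1 <= n)%nat -> 0 < pi n.
Hypothesis Hs : is_series pi 1.
Hypothesis Hpi : forall m, (1 <= m)%nat -> is_series (fun n => pi n * Lbar_entry be th ga n m) (lam * pi m).

Lemma tail_nonneg a M : (forall k, (1 <= k <= M)%nat -> 0 <= a k) ->
  forall n, (M < n)%nat -> 0 <= pi n * Lbar be th ga (trunc a M) n.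
Proof.
  intros Ha n Hn. apply Rmult_le_pos; [apply Rlt_le, Hppos; lia|].
  apply Lbar_nonneg; [| | |lra].
  - intros k. unfold trunc. destruct (Nat.leb_spec 1 k), (Nat.leb_spec k M); simpl; try lra. apply Ha; lia.
  - unfold trunc. destruct (Nat.leb_spec 1 n), (Nat.leb_spec n M); simpl; try lia; reflexivity.
  - unfold trunc. destruct (Nat.leb_spec 1 (S n)), (Nat.leb_spec (S n) M); simpl; try lia; reflexivity.
Qed.

Lemma trunc_in a M k : (1 <= k <= M)%nat -> trunc a M k = a k.
Proof. intros H. unfold trunc. destruct (Nat.leb_spec 1 k), (Nat.leb_spec k M); simpl; try lia; reflexivity. Qed.
Lemma trunc_out a M k : (M < k)%nat -> trunc a M k = 0.
Proof. intros H. unfold trunc. destruct (Nat.leb_spec 1 k), (Nat.leb_spec k M); simpl; try lia; reflexivity. Qed.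

Lemma key1 K : (1 <= K)%nat ->
  (ga - th) * sumto (fun n => pi n * (INR n - 1)) (S K) - be * INR (S K) * pi (S K)
   <= lam * sumto (fun m => 1 * pi m) (S K).
Proof.
  intros HK. set (M := S K).
  assert (H := partial_le_lim _ _ M (series_trunc be th ga lam pi Hs Hpi (fun _ => 1) M)
                 (tail_nonneg (fun _ => 1) M (fun _ _ => Rle_0_1))).
  rewrite sum_n_sumto, Hp0, Rmult_0_l, Rplus_0_l in H.
  unfold M in H at 2. simpl sumto in H at 1. fold M in H.
  rewrite (sumto_ext_loc _ (fun n => (ga - th) * (pi n * (INR n - 1)))) in H.
  2:{ intros n Hn. rewrite (Lbar_loc _ _ _ _ (fun _ => 1) n) by (try lia; intros; apply trunc_in; unfold M; lia).
      rewrite Lbar_one by lia. rewrite trunc_in by (unfold M; lia). ring. }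
  rewrite (Lbar_loc _ _ _ _ (fun _ => 1) M) in H by (try (unfold M; lia); intros; apply trunc_in; lia).
  rewrite Lbar_one, trunc_out in H by (unfold M; lia).
  rewrite sumto_scal in H.
  replace (sumto (fun n => pi n * (INR n - 1)) M) with (sumto (fun n => pi n * (INR n - 1)) K + pi M * (INR M - 1)) by reflexivity.
  nra.
Qed.

Lemma key2 K : (1 <= K)%nat ->
  c * (lam * sumto (fun m => 1 * pi m) (S K) - (ga - th) * sumto (fun n => pi n * (INR n - 1)) (S K)
       + be * INR (S K) * pi (S K)) <= be * INR (S K) * pi (S K) * h (S (S K)).
Proof.
  intros HK. set (M := S K).
  assert (H := partial_le_lim _ _ M (series_trunc be th ga lam pi Hs Hpi (fun k => h k - c) M)
                 (tail_nonneg (fun k => h k - c) M (fun k Hk => ltac:(generalize (Hh k ltac:(lia)); lra)))).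
  rewrite sum_n_sumto, Hp0, Rmult_0_l, Rplus_0_l in H.
  unfold M in H at 2. simpl sumto in H at 1. fold M in H.
  rewrite (sumto_ext_loc _ (fun n => lam * (h n * pi n) + (- c * (ga - th)) * (pi n * (INR n - 1)))) in H.
  2:{ intros n Hn. rewrite (Lbar_loc _ _ _ _ (fun k => h k + (- c) * 1) n) by (try lia; intros; rewrite trunc_in by (unfold M; lia); ring).
      rewrite Lbar_lin, Heig, Lbar_one by lia. rewrite trunc_in by (unfold M; lia). ring. }
  rewrite (Lbar_loc _ _ _ _ (fun k => h k + (- c) * 1) M) in H by (try (unfold M; lia); intros; rewrite trunc_in by lia; ring).
  rewrite Lbar_lin, Heig, Lbar_one, trunc_out in H by (unfold M; lia).
  rewrite sumto_lin, sumto_scal in H.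
  rewrite (sumto_ext_loc (fun m => (h m - c) * pi m) (fun m => h m * pi m + (- c) * (1 * pi m))) in H by (intros; ring).
  rewrite sumto_lin in H.
  replace (sumto (fun n => pi n * (INR n - 1)) M) with (sumto (fun n => pi n * (INR n - 1)) K + pi M * (INR M - 1)) by reflexivity.
  replace (sumto (fun n => h n * pi n) M) with (sumto (fun n => h n * pi n) K + h M * pi M) in H by reflexivity.
  nra.
Qed.
End Key.

Theorem lemma6p7 (beta theta gamma : R) (hbeta : 0 < beta) (htheta : 0 < theta)
  (hgamma : 0 < gamma) (lam : R) (hlam : IsPerronRoot beta theta gamma lam) :
  (gamma > theta -> lam > 0) /\ (gamma = theta -> lam = 0) /\ (gamma < theta -> lam < 0).
Proof.
  destruct hlam as [[h [[c [C [Hc Hh]]] Heig]] [pi [Hp0 [Hppos [Hs Hpi]]]]].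
  assert (Hhc : forall n, (1 <= n)%nat -> c <= h n) by (intros n Hn; apply (Hh n Hn)).
  assert (HhC : forall n, (1 <= n)%nat -> h n <= C) by (intros n Hn; apply (Hh n Hn)).
  assert (HC : c <= C) by (generalize (Hh 1%nat ltac:(lia)); lra).
  assert (Hnn : forall n, 0 <= pi n) by (intros [|n]; [lra|apply Rlt_le, Hppos; lia]).
  assert (Hp1 : 0 < pi 1%nat) by (apply Hppos; lia).
  assert (Hp2 : 0 < pi 2%nat) by (apply Hppos; lia).
  pose (S_ K := sumto (fun m => 1 * pi m) (S K)).
  pose (Q_ K := sumto (fun n => pi n * (INR n - 1)) (S K)).
  assert (HS : forall K, (1 <= K)%nat -> pi 1%nat <= S_ K).
  { intros K HK. unfold S_. rewrite <- (Rmult_1_l (pi 1%nat)).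
    apply (sumto_ge (fun m => 1 * pi m)); [intros; rewrite Rmult_1_l; apply Hnn| lia]. }
  assert (HQ : forall K, (1 <= K)%nat -> pi 2%nat <= Q_ K).
  { intros K HK. unfold Q_.
    replace (pi 2%nat) with (pi 2%nat * (INR 2 - 1)) by (simpl; ring).
    apply (sumto_ge (fun n => pi n * (INR n - 1))); [|lia].
    intros k Hk. apply Rmult_le_pos; [apply Hnn|]. apply le_INR in Hk. simpl in Hk. lra. }
  assert (K1 : forall K, (1 <= K)%nat ->
     (gamma - theta) * Q_ K - beta * INR (S K) * pi (S K) <= lam * S_ K)
    by (intros K HK; apply (key1 beta theta gamma lam pi); auto).
  assert (K2 : forall K, (1 <= K)%nat ->
     c * (lam * S_ K - (gamma - theta) * Q_ K + beta * INR (S K) * pi (S K))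
       <= beta * INR (S K) * pi (S K) * h (S (S K)))
    by (intros K HK; apply (key2 beta theta gamma lam c h pi); auto; lra).
  assert (Fin : forall kap, 0 < kap -> (forall K, (1 <= K)%nat -> kap <= INR (S K) * pi (S K)) -> False).
  { intros kap Hk HK. apply (no_harmonic pi kap Hk Hp0 Hnn Hs).
    intros n Hn. destruct n as [|K]; [lia|]. apply HK. lia. }
  assert (Hpos : forall K, 0 <= INR (S K) * pi (S K)) by (intros; apply Rmult_le_pos; [apply pos_INR|apply Hnn]).
  split; [|split].
  - intros Hgt. destruct (Rle_lt_dec lam 0) as [Hl|Hl]; [|lra]. exfalso.
    apply (Fin ((gamma - theta) * pi 2%nat / beta)).
    { apply Rdiv_lt_0_compat; [nra|lra]. }
    intros K HK. specialize (K1 K HK). specialize (HQ K HK). specialize (HS K HK).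
    apply (Rmult_le_reg_l beta); [lra|]. unfold Rdiv.
    replace (beta * ((gamma - theta) * pi 2%nat * / beta)) with ((gamma - theta) * pi 2%nat) by (field; lra).
    assert (lam * S_ K <= 0) by nra. nra.
  - intros Heq. subst gamma.
    destruct (Rtotal_order lam 0) as [Hl|[Hl|Hl]]; [exfalso| exact Hl | exfalso].
    + apply (Fin (- lam * pi 1%nat / beta)).
      { apply Rdiv_lt_0_compat; [nra|lra]. }
      intros K HK. specialize (K1 K HK). specialize (HS K HK).
      apply (Rmult_le_reg_l beta); [lra|]. unfold Rdiv.
      replace (beta * (- lam * pi 1%nat * / beta)) with (- lam * pi 1%nat) by (field; lra).
      assert (lam * S_ K <= lam * pi 1%nat) by nra. nra.
    + apply (Fin (c * lam * pi 1%nat / (beta * C))).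
      { apply Rdiv_lt_0_compat; [|nra]. apply Rmult_lt_0_compat; [nra|lra]. }
      intros K HK. specialize (K2 K HK). specialize (HS K HK).
      assert (Hh2 : h (S (S K)) <= C) by (apply HhC; lia).
      specialize (Hpos K).
      apply (Rmult_le_reg_l (beta * C)); [nra|]. unfold Rdiv.
      replace (beta * C * (c * lam * pi 1%nat * / (beta * C))) with (c * lam * pi 1%nat) by (field; nra).
      assert (c * (lam * pi 1%nat) <= c * (lam * S_ K)) by (apply Rmult_le_compat_l; nra).
      assert (beta * INR (S K) * pi (S K) * h (S (S K)) <= beta * INR (S K) * pi (S K) * C)
        by (apply Rmult_le_compat_l; nra).
      replace ((theta - theta) * Q_ K) with 0 in K2 by ring.
      assert (0 <= c * (beta * INR (S K) * pi (S K))) by (apply Rmult_le_pos; nra).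
      nra.
  - intros Hlt. destruct (Rle_lt_dec 0 lam) as [Hl|Hl]; [|lra]. exfalso.
    apply (Fin (c * (theta - gamma) * pi 2%nat / (beta * C))).
    { apply Rdiv_lt_0_compat; [|nra]. apply Rmult_lt_0_compat; [nra|lra]. }
    intros K HK. specialize (K2 K HK). specialize (HS K HK). specialize (HQ K HK).
    assert (Hh2 : h (S (S K)) <= C) by (apply HhC; lia).
    specialize (Hpos K).
    apply (Rmult_le_reg_l (beta * C)); [nra|]. unfold Rdiv.
    replace (beta * C * (c * (theta - gamma) * pi 2%nat * / (beta * C))) with (c * ((theta - gamma) * pi 2%nat)) by (field; nra).
    assert (beta * INR (S K) * pi (S K) * h (S (S K)) <= beta * INR (S K) * pi (S K) * C)
      by (apply Rmult_le_compat_l; nra).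
    assert (0 <= lam * S_ K) by nra.
    assert ((theta - gamma) * pi 2%nat <= (theta - gamma) * Q_ K) by (apply Rmult_le_compat_l; lra).
    assert (c * ((theta - gamma) * pi 2%nat) <= c * (lam * S_ K - (gamma - theta) * Q_ K + beta * INR (S K) * pi (S K))).
    { apply Rmult_le_compat_l; [lra|]. nra. }
    nra.
Qed.
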